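(* Consider an instance $(f,V,B)$ and run the main loop of Algorithm $\mathsf{LA}$ (described in the context). Let $X$ and $Y$ be the two sets at the end of the main loop, and let $O_1$ be an optimal solution of the problem restricted to $V_1$, i.e. $O_1\in\arg\max\{f(S): S\subseteq V_1,\ c(S)\le B\}$. Then $$f(O_1)\le 3\big(f(X)+f(Y)\big).$$
   Context: Setting: $V$ is a finite ground set of size $n$. $f:2^V\to\mathbb{R}_{\ge 0}$ is a non-negative submodular set function with $f(\emptyset)=0$. Submodular means $f(A\cup\{e\})-f(A)\ge f(B'\cup\{e\})-f(B')$ for all $A\subseteq B'\subseteq V$ and $e\in V\setminus B'$. Each $e\in V$ has a cost $c(e)>0$, and $c(S)=\sum_{e\in S}c(e)$. $B>0$ is a budget, and $c(e)\le B$ for every $e\in V$. The notation $f(e\mid S)=f(S\cup\{e\})-f(S)$ is used throughout. Algorithm $\mathsf{LA}$ on $(f,V,B)$ runs as follows. 1. Set $V_1=\{e\in V: c(e)\le B/2\}$ and $X=Y=\emptyset$. Let $e_{\max}\in\arg\max_{e\in V}f(e)$. 2. Main loop: process each $e\in V_1$ once, in an arbitrary fixed order. Among the sets $Z\in\{X,Y\}$ satisfying $f(e\mid Z)/c(e)\ge f(Z)/B$, choose one maximizing $f(e\mid Z)/c(e)$, breaking ties arbitrarily. If such a $Z$ exists, add $e$ to $Z$. 3. After the loop, for $T\in\{X,Y\}$ let $T(j)$ denote the set of the last $j$ elements added to $T$. Let $X'$ be the set $X(j)$ of largest cost among those with $0\le j\le|X|$ and $c(X(j))\le B$. Define $Y'$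 from $Y$ in the same way. 4. Return the set $S$ among $X'$, $Y'$ and $\{e_{\max}\}$ with the largest $f$ value. *)

(* Defs.v *)
From mathcomp Require Import all_boot all_order all_algebra.
Set Implicit Arguments. Unset Strict Implicit. Unset Printing Implicit Defensive.
Import Order.TTheory GRing.Theory Num.Theory.
Local Open Scope ring_scope.

Section LA.
Variables (R : realFieldType) (V : finType).

Definition submodular (f : {set V} -> R) : Prop :=
  forall (A B' : {set V}) (e : V), A \subset B' -> e \notin B' ->
    f (e |: A) - f A >= f (e |: B') - f B'.

Definition marg (f : {set V} -> R) (e : V) (S : {set V}) : R := f (e |: S) - f S.

Definition cost (c : V -> R) (S : {set V}) : R := \sum_(e in S) c e.

Definition V1 (c : V -> R) (B : R) : {set V} := [set e | c e <= B / 2].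

Definition eligible (f : {set V} -> R) (c : V -> R) (B : R) (e : V) (Z : {set V}) : bool :=
  marg f e Z / c e >= f Z / B.

(* One iteration of the main loop of LA on element e: the allowed transitions
   from (X, Y) (nondeterminism = arbitrary tie-breaking). *)
Definition LA_step (f : {set V} -> R) (c : V -> R) (B : R)
  (st : {set V} * {set V}) (e : V) (st' : {set V} * {set V}) : Prop :=
  let: (X, Y) := st in
  [/\ ~~ eligible f c B e X, ~~ eligible f c B e Y & st' = (X, Y)]
  \/ [/\ eligible f c B e X,
         (eligible f c B e Y -> marg f e Y / c e <= marg f e X / c e)
       & st' = (e |: X, Y)]
  \/ [/\ eligible f c B e Y,
         (eligible f c B e X -> marg f e X / c e <= marg f e Y / c e)
       & st' = (X, e |: Y)].

Inductive LA_loop (f : {set V} -> R) (c : V -> R) (B : R) :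
  {set V} * {set V} -> seq V -> {set V} * {set V} -> Prop :=
| LA_loop_nil st : LA_loop f c B st [::] st
| LA_loop_cons st e s st' st'' :
    LA_step f c B st e st' -> LA_loop f c B st' s st'' -> LA_loop f c B st (e :: s) st''.

End LA.

(* Main.v *)
Require Import Defs.
From mathcomp Require Import all_boot all_order all_algebra.
From mathcomp Require Import ring lra.
Import Order.TTheory GRing.Theory Num.Theory.
Local Open Scope ring_scope.

Lemma divle (R : realFieldType) (a b x y : R) : 0 < x -> 0 < y ->
  (a / x <= b / y) = (a * y <= b * x).
Proof.
move=> x0 y0; rewrite ler_pdivlMr // mulrAC ler_pdivrMr //.
Qed.

Lemma set_cons (V : finType) (e : V) (s : seq V) :
  [set x in e :: s] = e |: [set x in s].
Proof. by apply/setP => x; rewrite !inE. Qed.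

Lemma set_nil (V : finType) : [set x in [::]] = set0 :> {set V}.
Proof. by apply/setP => x; rewrite !inE. Qed.

Lemma sub_seq (R : realFieldType) (V : finType) (f : {set V} -> R)
  (f_sub : submodular f) (s : seq V) : forall (A Bs : {set V}),
  A \subset Bs -> uniq s -> (forall x, x \in s -> x \notin Bs) ->
  f (Bs :|: [set x in s]) - f Bs <= f (A :|: [set x in s]) - f A.
Proof.
elim: s => [|e s IH] A Bs sAB us ds.
  by rewrite set_nil !setU0 !subrr.
move: us => /= /andP [es us].
have eB : e \notin Bs by apply: ds; rewrite inE eqxx.
have := IH (e |: A) (e |: Bs) (setUS _ sAB) us.
have H2 : forall x, x \in s -> x \notin e |: Bs.
  move=> x xs; rewrite !inE negb_or ds ?inE ?xs ?orbT // andbT.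
  by apply/eqP => xe; move: es; rewrite -xe xs.
move=> /(_ H2).
have Hs := f_sub A Bs e sAB eB.
rewrite set_cons.
have -> : Bs :|: (e |: [set x in s]) = (e |: Bs) :|: [set x in s].
  by apply/setP => x; rewrite !inE; case: (x == e); case: (x \in s); rewrite /= ?orbT ?orbF.
have -> : A :|: (e |: [set x in s]) = (e |: A) :|: [set x in s].
  by apply/setP => x; rewrite !inE; case: (x == e); case: (x \in s); rewrite /= ?orbT ?orbF.
lra.
Qed.

Lemma sum_seq (R : realFieldType) (V : finType) (f : {set V} -> R)
  (f_sub : submodular f) (A : {set V}) (s : seq V) : uniq s ->
  f (A :|: [set x in s]) <= f A + \sum_(x <- s) marg f x A.
Proof.
elim: s => [|e s IH] us.
  by rewrite set_nil setU0 big_nil addr0.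
move: us => /= /andP [es us].
rewrite big_cons set_cons.
have -> : A :|: (e |: [set x in s]) = e |: (A :|: [set x in s]).
  by apply/setP => x; rewrite !inE; case: (x == e); case: (x \in s); rewrite /= ?orbT ?orbF.
have := IH us.
case eA : (e \in A).
  have -> : e |: (A :|: [set x in s]) = A :|: [set x in s].
    by apply/setP => x; rewrite !inE; case: eqP => // ->; rewrite eA.
  rewrite /marg.
  have -> : e |: A = A by apply/setP => x; rewrite !inE; case: eqP => // ->; rewrite eA.
  rewrite subrr; lra.
have := f_sub A (A :|: [set x in s]) e (subsetUl _ _).
rewrite !inE eA es /= => /(_ isT); rewrite /marg; lra.
Qed.

Section Loop.
Context (R : realFieldType) (V : finType) (f : {set V} -> R) (c : V -> R) (B : R).

Lemma step_swap X0 Y0 e X1 Y1 :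
  LA_step f c B (X0, Y0) e (X1, Y1) -> LA_step f c B (Y0, X0) e (Y1, X1).
Proof.
rewrite /LA_step => -[[h1 h2 [-> ->]]|[[h1 h2 [-> ->]]|[h1 h2 [-> ->]]]].
- by left.
- by right; right.
- by right; left.
Qed.

Lemma loop_swap st s st' : LA_loop f c B st s st' ->
  LA_loop f c B (st.2, st.1) s (st'.2, st'.1).
Proof.
elim => [st0|[X0 Y0] e s0 [X1 Y1] st2 Hs _ IH]; first exact: LA_loop_nil.
apply: LA_loop_cons IH; exact: step_swap.
Qed.

Lemma marg_elig_ge0 (f_ge0 : forall S, 0 <= f S) (c_gt0 : forall e, 0 < c e)
  (B_gt0 : 0 < B) e Z : eligible f c B e Z -> 0 <= marg f e Z.
Proof.
rewrite /eligible divle // => H.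
have := mulr_ge0 (f_ge0 Z) (ltW (c_gt0 e)).
have := B_gt0. nra.
Qed.

Lemma step_mono (f_ge0 : forall S, 0 <= f S) (c_gt0 : forall e, 0 < c e)
  (B_gt0 : 0 < B) X0 Y0 e X1 Y1 :
  LA_step f c B (X0, Y0) e (X1, Y1) ->
  [/\ X0 \subset X1, Y0 \subset Y1, f X0 <= f X1 & f Y0 <= f Y1].
Proof.
rewrite /LA_step => -[[h1 h2 [-> ->]]|[[h1 h2 [-> ->]]|[h1 h2 [-> ->]]]].
- by rewrite !subxx !lexx.
- have := marg_elig_ge0 f_ge0 c_gt0 B_gt0 _ _ h1; rewrite /marg => h.
  rewrite subsetUr subxx lexx; split => //; lra.
- have := marg_elig_ge0 f_ge0 c_gt0 B_gt0 _ _ h1; rewrite /marg => h.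
  rewrite subsetUr subxx lexx; split => //; lra.
Qed.

Lemma loop_mono (f_ge0 : forall S, 0 <= f S) (c_gt0 : forall e, 0 < c e)
  (B_gt0 : 0 < B) st s st' : LA_loop f c B st s st' ->
  [/\ st.1 \subset st'.1, st.2 \subset st'.2, f st.1 <= f st'.1 & f st.2 <= f st'.2].
Proof.
elim => [st0|[X0 Y0] e s0 [X1 Y1] st2 Hs _ [i1 i2 i3 i4]].
  by rewrite !subxx !lexx.
have [j1 j2 j3 j4] := step_mono f_ge0 c_gt0 B_gt0 _ _ _ _ _ Hs.
split; [exact: subset_trans i1|exact: subset_trans i2|exact: le_trans i3|exact: le_trans i4].
Qed.

Lemma loop_disj st s st' : LA_loop f c B st s st' ->
  uniq s -> st.1 :&: st.2 = set0 -> (forall x, x \in s -> x \notin st.1 :|: st.2) ->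
  st'.1 :&: st'.2 = set0.
Proof.
elim => [//|[X0 Y0] e s0 [X1 Y1] st2 Hs _ IH] /= /andP[es us] d0 ds.
apply: IH => //=.
- move: Hs; rewrite /LA_step => -[[h1 h2 [-> ->]]|[[h1 h2 [-> ->]]|[h1 h2 [-> ->]]]] //.
  + apply/setP => x; move/setP: d0 => /(_ x); rewrite !inE.
    case: eqP => [->|_] //=; have := ds e; rewrite !inE eqxx => /(_ isT).
    by rewrite negb_or => /andP[_ /negbTE ->]; rewrite andbF.
  + apply/setP => x; move/setP: d0 => /(_ x); rewrite !inE.
    case: eqP => [->|_] //=; have := ds e; rewrite !inE eqxx => /(_ isT).
    by rewrite negb_or => /andP[/negbTE -> _].
- move=> x xs; have := ds x; rewrite inE xs orbT => /(_ isT).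
  have xe : x != e by apply/eqP => xe; move: es; rewrite -xe xs.
  move: Hs; rewrite /LA_step => -[[h1 h2 [-> ->]]|[[h1 h2 [-> ->]]|[h1 h2 [-> ->]]]] //.
  + by rewrite !inE (negbTE xe).
  + by rewrite !inE (negbTE xe).
Qed.

End Loop.

Lemma loop_main (R : realFieldType) (V : finType) (f : {set V} -> R) (c : V -> R) (B : R)
  (f_ge0 : forall S, 0 <= f S) (f_sub : submodular f)
  (c_gt0 : forall e, 0 < c e) (B_gt0 : 0 < B) (O : {set V})
  st s st' : LA_loop f c B st s st' ->
  B * (\sum_(o <- s | (o \in O) && (o \notin st'.1)) marg f o st'.1) <=
  (\sum_(o <- s | o \in O) c o) * f st'.1 + B * (f st'.2 - f st.2).
Proof.
elim => [st0|[X0 Y0] e s0 [X1 Y1] [X Y] Hs Hl IH] /=.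
  by rewrite !big_nil subrr mulr0 mul0r addr0.
have [m1 m2 m3 m4] := @loop_mono R V f c B f_ge0 c_gt0 B_gt0 _ _ _ Hl.
have [n1 n2 n3 n4] := @step_mono R V f c B f_ge0 c_gt0 B_gt0 _ _ _ _ _ Hs.
move: m1 m2 m3 m4 IH => /= m1 m2 m3 m4 IH.
have x0x := subset_trans n1 m1.
have fx0x := le_trans n3 m3.
have hB := ler_wpM2l (ltW B_gt0) n4.
rewrite !big_cons.
have cfX : 0 <= c e * f X := mulr_ge0 (ltW (c_gt0 e)) (f_ge0 X).
case: (boolP (e \in O)) => eO /=; last lra.
case: (boolP (e \in X)) => eX /=; first lra.
suff key : B * marg f e X <= c e * f X + B * (f Y1 - f Y0) by lra.
have sm := f_sub X0 X e x0x eX.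
have hm := ler_wpM2l (ltW B_gt0) sm.
have hc := ler_wpM2r (ltW (c_gt0 e)) fx0x.
have notel : ~~ eligible f c B e X0 -> B * marg f e X <= c e * f X.
  rewrite /eligible divle // -ltNge => h.
  rewrite /marg in h hm *; lra.
move: Hs; rewrite /LA_step => -[[h1 h2 [e1 e2]]|[[h1 h2 [e1 e2]]|[h1 h2 [e1 e2]]]].
- rewrite e2 subrr mulr0 addr0; exact: notel.
- move/subsetP: m1 => /(_ e); rewrite e1 !inE eqxx /= => /(_ isT) eX'.
  by rewrite eX' in eX.
- have g0 := @marg_elig_ge0 R V f c B f_ge0 c_gt0 B_gt0 _ _ h1.
  have gB := mulr_ge0 (ltW B_gt0) g0.
  have -> : f Y1 - f Y0 = marg f e Y0 by rewrite e2.
  case: (boolP (eligible f c B e X0)) => hx; last by have := notel hx; lra.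
  have := h2 hx; rewrite divle // ler_pM2r // => h3.
  have h4 := ler_wpM2l (ltW B_gt0) h3.
  rewrite /marg in h4 hm gB *; lra.
Qed.

Lemma sum_ord (R : realFieldType) (V : finType) (ord : seq V) (W A : {set V}) (F : V -> R) :
  uniq ord -> ord =i W -> A \subset W ->
  \sum_(o <- ord | o \in A) F o = \sum_(o in A) F o.
Proof.
move=> u hW sA; rewrite -big_filter -big_enum; apply: perm_big.
apply: uniq_perm; [exact: filter_uniq|exact: enum_uniq|].
move=> x; rewrite mem_filter mem_enum hW.
by case xA: (x \in A) => //=; move/subsetP: sA => /(_ x xA).
Qed.

Theorem lemma2 (R : realFieldType) (V : finType)
  (f : {set V} -> R) (c : V -> R) (B : R)
  (f_ge0 : forall S : {set V}, 0 <= f S)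
  (f0 : f set0 = 0)
  (f_sub : submodular f)
  (c_gt0 : forall e : V, 0 < c e)
  (B_gt0 : 0 < B)
  (c_leB : forall e : V, c e <= B)
  (ord : seq V) (ord_uniq : uniq ord) (ord_V1 : ord =i V1 c B)
  (X Y : {set V}) (run : LA_loop f c B (set0, set0) ord (X, Y))
  (O1 : {set V}) (O1_V1 : O1 \subset V1 c B) (O1_cost : cost c O1 <= B)
  (O1_opt : forall S : {set V}, S \subset V1 c B -> cost c S <= B -> f S <= f O1) :
  f O1 <= 3 * (f X + f Y).

Proof.
have run' := loop_swap _ _ _ _ _ _ _ _ run.
have hX := @loop_main _ _ f c B f_ge0 f_sub c_gt0 B_gt0 O1 _ _ _ run.
have hY := @loop_main _ _ f c B f_ge0 f_sub c_gt0 B_gt0 O1 _ _ _ run'.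
move: hX hY => /=; rewrite f0 !subr0.
have hc : \sum_(o <- ord | o \in O1) c o = cost c O1 by apply: (@sum_ord _ _ _ _ _ _ ord_uniq ord_V1).
have hs : forall Z : {set V}, \sum_(o <- ord | (o \in O1) && (o \notin Z)) marg f o Z
    = \sum_(o in O1 :\: Z) marg f o Z.
  move=> Z; rewrite -(@sum_ord _ _ _ _ _ _ ord_uniq ord_V1); last first.
    by apply: subset_trans O1_V1; apply: subsetDl.
  by apply: eq_bigl => x; rewrite !inE andbC.
rewrite hc !hs => hX hY.
have gX := @sum_seq _ _ _ f_sub X _ (enum_uniq (O1 :\: X)).
have gY := @sum_seq _ _ _ f_sub Y _ (enum_uniq (O1 :\: Y)).
rewrite set_enum big_enum /= in gX; rewrite set_enum big_enum /= in gY.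
have eX : X :|: (O1 :\: X) = O1 :|: X.
  by apply/setP => x; rewrite !inE; case: (x \in X); case: (x \in O1).
have eY : Y :|: (O1 :\: Y) = O1 :|: Y.
  by apply/setP => x; rewrite !inE; case: (x \in Y); case: (x \in O1).
rewrite eX in gX; rewrite eY in gY.
have dXY : X :&: Y = set0.
  apply: (loop_disj _ _ _ _ _ _ _ _ run ord_uniq) => /=; first by rewrite setI0.
  by move=> x _; rewrite !inE.
have hsub := @sub_seq _ _ _ f_sub (enum (X :\: O1)) _ _ (subsetUl O1 Y) (enum_uniq _).
have : f (O1 :|: Y :|: [set x in enum (X :\: O1)]) - f (O1 :|: Y)
       <= f (O1 :|: [set x in enum (X :\: O1)]) - f O1.
  apply: hsub => x; rewrite mem_enum !inE => /andP[xO xX].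
  rewrite (negbTE xO) /=; apply/negP => xY.
  by move/setP: dXY => /(_ x); rewrite !inE xX xY.
rewrite set_enum.
have -> : O1 :|: (X :\: O1) = O1 :|: X.
  by apply/setP => x; rewrite !inE; case: (x \in X); case: (x \in O1).
move=> hlat.
have f3 := f_ge0 (O1 :|: Y :|: (X :\: O1)).
have k1 := ler_wpM2l (ltW B_gt0) gX.
have k2 := ler_wpM2l (ltW B_gt0) gY.
have k3 := ler_wpM2r (f_ge0 X) O1_cost.
have k4 := ler_wpM2r (f_ge0 Y) O1_cost.
rewrite -(ler_pM2l B_gt0).
have k5 : B * f O1 <= B * f (O1 :|: X) + B * f (O1 :|: Y).
  rewrite -mulrDr; apply: ler_wpM2l; [exact: ltW|lra].
lra.
Qed.
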